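(* Let $N\subset\mathbb{R}^3$ be an open set with coordinates $(t,x,y)$ and metric $g_f^{\varepsilon}=\varepsilon\,dx^2+f(x,y)\,dy^2+2\,dt\,dy$ ($\varepsilon=\pm1$, $f$ smooth), with orthonormal frame $$e_1=\partial_x,\quad e_2=\tfrac{2-f}{2\sqrt2}\partial_t+\tfrac1{\sqrt2}\partial_y,\quad e_3=\tfrac{2+f}{2\sqrt2}\partial_t-\tfrac1{\sqrt2}\partial_y,$$ so that $\langle e_1,e_1\rangle=\varepsilon$, $\langle e_2,e_2\rangle=1$, $\langle e_3,e_3\rangle=-1$. Let $\Sigma\subset N$ be a non-degenerate totally umbilical surface with unit normal $\mathcal{V}=v_1e_1+v_2e_2+v_3e_3$, where $v_i\in C^\infty(\Sigma)$ and $\varepsilon v_1^2+v_2^2-v_3^2=\delta=\pm1$, and assume $v_1\neq0$ on $\Sigma$. Let $\lambda\in C^\infty(\Sigma)$ satisfy $-\overline{\nabla}_T\mathcal{V}=\lambda T$ for all $T\in T\Sigma$, and let $\nabla\lambda$ denote the gradient of $\lambda$ on $\Sigma$ with respect to the induced metric. Then $$\langle\nabla\lambda,e_1\rangle=\delta\frac{f_{xx}v_1(v_2-v_3)^2}{4},$$ $$\langle\nabla\lambda,e_2\rangle=\delta\frac{f_{xx}(v_3-v_2)}{4}\bigl(v_1^2+\varepsilon v_3(v_2-v_3)\bigr),$$ $$\langle\nabla\lambda,e_3\rangle=\delta\frac{f_{xx}(v_2-v_3)}{4}\bigl(v_1^2+\varepsilon v_2(v_2-v_3)\bigr).$$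
   Context: $\overline{\nabla}$ denotes the Levi-Civita connection of $g_f^{\varepsilon}$, and $\langle\cdot,\cdot\rangle$ denotes both $g_f^\varepsilon$ and the induced metric on $\Sigma$. A surface is non-degenerate if its induced metric is Riemannian or Lorentzian. *)

(* Defs.v *)
From Stdlib Require Import Reals Lra List.
From Coquelicot Require Import Coquelicot.
Open Scope R_scope.

(** Points of R^2 (parameter domain of the surface, and the (x,y)-plane). *)
Definition R2 := (R * R)%type.
(** Points of R^3 written as (t, (x, y)). *)
Definition R3 := (R * (R * R))%type.

(** Coordinates of a point of R^3: 0 = t, 1 = x, 2 = y. *)
Definition coord (k : nat) (p : R3) : R :=
  match k with
  | 0%nat => fst p
  | 1%nat => fst (snd p)
  | _ => snd (snd p)
  end.

Definition shift3 (k : nat) (s : R) (p : R3) : R3 :=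
  match k with
  | 0%nat => (fst p + s, snd p)
  | 1%nat => (fst p, (fst (snd p) + s, snd (snd p)))
  | _ => (fst p, (fst (snd p), snd (snd p) + s))
  end.

Definition pd3 (k : nat) (h : R3 -> R) (p : R3) : R :=
  Derive (fun s => h (shift3 k s p)) 0.

(** Partial derivatives on R^2: [true] = first variable, [false] = second. *)
Definition pd2 (i : bool) (h : R2 -> R) (q : R2) : R :=
  if i then Derive (fun s => h (s, snd q)) (fst q)
  else Derive (fun s => h (fst q, s)) (snd q).

Fixpoint iter_pd2 (l : list bool) (h : R2 -> R) : R2 -> R :=
  match l with
  | nil => h
  | i :: l' => pd2 i (iter_pd2 l' h)
  end.

Definition smooth2 (U : R2 -> Prop) (h : R2 -> R) : Prop :=
  forall (l : list bool) (q : R2), U q ->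
    continuous (iter_pd2 l h) q /\
    ex_derive (fun s => iter_pd2 l h (s, snd q)) (fst q) /\
    ex_derive (fun s => iter_pd2 l h (fst q, s)) (snd q).

Definition sum3 (F : nat -> R) : R := F 0%nat + F 1%nat + F 2%nat.

(** Vectors of R^3 (components in the coordinate basis d_t, d_x, d_y). *)
Definition vec3 := nat -> R.

Section Metric.
Variables (eps : R) (f : R2 -> R).

Definition gmet (p : R3) (i j : nat) : R :=
  match i, j with
  | 1%nat, 1%nat => eps
  | 2%nat, 2%nat => f (snd p)
  | 0%nat, 2%nat => 1
  | 2%nat, 0%nat => 1
  | _, _ => 0
  end.

(** Its inverse matrix (for eps = +-1): g^{tt} = -f, g^{xx} = 1/eps, g^{ty} = 1. *)
Definition ginv (p : R3) (i j : nat) : R :=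
  match i, j with
  | 0%nat, 0%nat => - f (snd p)
  | 1%nat, 1%nat => / eps
  | 0%nat, 2%nat => 1
  | 2%nat, 0%nat => 1
  | _, _ => 0
  end.

Definition christoffel (p : R3) (k i j : nat) : R :=
  / 2 * sum3 (fun l => ginv p k l *
    (pd3 i (fun p' => gmet p' j l) p + pd3 j (fun p' => gmet p' i l) p
     - pd3 l (fun p' => gmet p' i j) p)).

Definition gdot (p : R3) (a b : vec3) : R :=
  sum3 (fun i => sum3 (fun j => gmet p i j * a i * b j)).

Definition e1 (p : R3) : vec3 := fun k =>
  match k with 1%nat => 1 | _ => 0 end.
Definition e2 (p : R3) : vec3 := fun k =>
  match k with
  | 0%nat => (2 - f (snd p)) / (2 * sqrt 2)
  | 1%nat => 0
  | _ => 1 / sqrt 2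
  end.
Definition e3 (p : R3) : vec3 := fun k =>
  match k with
  | 0%nat => (2 + f (snd p)) / (2 * sqrt 2)
  | 1%nat => 0
  | _ => - (1 / sqrt 2)
  end.

Definition fxx (q : R2) : R := pd2 true (pd2 true f) q.

End Metric.

Section Surface.
(** A surface given by a local parametrization X : U (open in R^2) -> N. *)
Variables (eps : R) (f : R2 -> R) (X : R2 -> R3).

Definition Xc (k : nat) (q : R2) : R := coord k (X q).
Definition Xu (q : R2) : vec3 := fun k => pd2 true (Xc k) q.
Definition Xw (q : R2) : vec3 := fun k => pd2 false (Xc k) q.

Definition h11 q := gdot eps f (X q) (Xu q) (Xu q).
Definition h12 q := gdot eps f (X q) (Xu q) (Xw q).
Definition h22 q := gdot eps f (X q) (Xw q) (Xw q).
Definition hdet q := h11 q * h22 q - h12 q * h12 q.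

Definition tang (a b : R) (q : R2) : vec3 := fun k => a * Xu q k + b * Xw q k.

Definition frame_field (v1 v2 v3 : R2 -> R) (q : R2) : vec3 := fun k =>
  v1 q * e1 (X q) k + v2 q * e2 f (X q) k + v3 q * e3 f (X q) k.

Definition covD (V : R2 -> vec3) (a b : R) (q : R2) : vec3 := fun k =>
  Derive (fun s => V (fst q + s * a, snd q + s * b) k) 0
  + sum3 (fun i => sum3 (fun j =>
      christoffel eps f (X q) k i j * tang a b q i * V q j)).

Definition grad (lam : R2 -> R) (q : R2) : vec3 := fun k =>
  let lu := pd2 true lam q in
  let lw := pd2 false lam q in
  let D := hdet q in
  (h22 q / D * lu - h12 q / D * lw) * Xu q k
  + (- h12 q / D * lu + h11 q / D * lw) * Xw q k.

End Surface.

(* Main.v *)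
Require Import Defs.
From Stdlib Require Import Reals Lra List Classical.
From Coquelicot Require Import Coquelicot.
Open Scope R_scope.


Lemma loc_line1 (P : R2 -> Prop) (q : R2) :
  locally q P -> locally (fst q) (fun s => P (s, snd q)).
Proof. intros [e He]. exists e. intros s Hs. apply He. exact (conj Hs (ball_center _ _)). Qed.

Lemma loc_line2 (P : R2 -> Prop) (q : R2) :
  locally q P -> locally (snd q) (fun s => P (fst q, s)).
Proof. intros [e He]. exists e. intros s Hs. apply He. exact (conj (ball_center _ _) Hs). Qed.

Lemma cont_plus (g h : R2 -> R) q : continuous g q -> continuous h q ->
  continuous (fun y => g y + h y) q.
Proof. intros; apply (continuous_plus g h); auto. Qed.
Lemma cont_mult (g h : R2 -> R) q : continuous g q -> continuous h q ->
  continuous (fun y => g y * h y) q.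
Proof. intros; apply (continuous_mult g h); auto. Qed.
Lemma cont_const (c : R) (q : R2) : continuous (fun _ => c) q.
Proof. apply continuous_const. Qed.

Lemma exd_plus (g h : R -> R) x : ex_derive g x -> ex_derive h x -> ex_derive (fun s => g s + h s) x.
Proof. intros; now apply (ex_derive_plus g h). Qed.
Lemma exd_scal (g : R -> R) (k x : R) : ex_derive g x -> ex_derive (fun s => k * g s) x.
Proof. intros; now apply (ex_derive_scal g). Qed.

Lemma Derive_shift (g : R -> R) x : ex_derive g x ->
  Derive (fun s => g (x + s)) 0 = Derive g x.
Proof.
  intros H. apply is_derive_unique.
  assert (H1 : is_derive (fun s => x + s) 0 1).
  { auto_derive; auto; ring. }
  assert (H2 : is_derive g (x + 0) (Derive g x)).
  { rewrite Rplus_0_r. now apply Derive_correct. }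
  pose proof (is_derive_comp g (fun s => x + s) 0 _ _ H2 H1) as H3.
  replace (Derive g x) with (scal 1 (Derive g x)) by (unfold scal; simpl; unfold mult; simpl; ring). exact H3.
Qed.

Lemma iter_app l g b : iter_pd2 l (pd2 b g) = iter_pd2 (l ++ b :: nil) g.
Proof. induction l as [|i l IH]; simpl; [reflexivity| now rewrite IH]. Qed.

Lemma smooth_pd U g b : smooth2 U g -> smooth2 U (pd2 b g).
Proof. intros H l q Hq. rewrite iter_app. now apply H. Qed.

Lemma smooth_cont U g q : smooth2 U g -> U q -> continuous g q.
Proof. intros H Hq. exact (proj1 (H nil q Hq)). Qed.
Lemma smooth_exu U g q : smooth2 U g -> U q -> ex_derive (fun s => g (s, snd q)) (fst q).
Proof. intros H Hq. exact (proj1 (proj2 (H nil q Hq))). Qed.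
Lemma smooth_exw U g q : smooth2 U g -> U q -> ex_derive (fun s => g (fst q, s)) (snd q).
Proof. intros H Hq. exact (proj2 (proj2 (H nil q Hq))). Qed.

Lemma pd2_ext_on (U : R2 -> Prop) (g h : R2 -> R) b q : open U -> U q ->
  (forall z, U z -> g z = h z) -> pd2 b g q = pd2 b h q.
Proof.
  intros HU Hq Hgh. pose proof (HU q Hq) as Hl. destruct b; unfold pd2.
  - apply Derive_ext_loc. apply (filter_imp (fun s => U (s, snd q))).
    + intros s Hs; now apply Hgh.
    + now apply loc_line1.
  - apply Derive_ext_loc. apply (filter_imp (fun s => U (fst q, s))).
    + intros s Hs; now apply Hgh.
    + now apply loc_line2.
Qed.

Lemma smooth_lin U g1 g2 a b : open U -> smooth2 U g1 -> smooth2 U g2 ->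
  smooth2 U (fun q => a * g1 q + b * g2 q).
Proof.
  intros HU H1 H2.
  assert (E : forall l q, U q -> iter_pd2 l (fun q => a * g1 q + b * g2 q) q
                 = a * iter_pd2 l g1 q + b * iter_pd2 l g2 q).
  { induction l as [|i l IH]; intros q Hq; [reflexivity|].
    simpl. rewrite (pd2_ext_on U _ (fun z => a * iter_pd2 l g1 z + b * iter_pd2 l g2 z) i q HU Hq IH).
    pose proof (H1 l q Hq) as [_ [A1 B1]]. pose proof (H2 l q Hq) as [_ [A2 B2]].
    destruct i; unfold pd2.
    - rewrite Derive_plus; [| apply ex_derive_scal; auto | apply ex_derive_scal; auto].
      now rewrite !Derive_scal.
    - rewrite Derive_plus; [| apply ex_derive_scal; auto | apply ex_derive_scal; auto].
      now rewrite !Derive_scal. }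
  intros l q Hq. pose proof (H1 l q Hq) as [C1 [A1 B1]]. pose proof (H2 l q Hq) as [C2 [A2 B2]].
  pose proof (HU q Hq) as Hl.
  split; [|split].
  - apply (continuous_ext_loc _ (fun z => a * iter_pd2 l g1 z + b * iter_pd2 l g2 z)).
    + apply (filter_imp U); auto. intros z Hz. now rewrite E.
    + apply cont_plus; apply cont_mult; auto; apply cont_const.
  - apply (ex_derive_ext_loc (fun s => a * iter_pd2 l g1 (s, snd q) + b * iter_pd2 l g2 (s, snd q))).
    + apply (filter_imp (fun s => U (s, snd q))); [|now apply loc_line1].
      intros s Hs. now rewrite E.
    + apply exd_plus; apply exd_scal; auto.
  - apply (ex_derive_ext_loc (fun s => a * iter_pd2 l g1 (fst q, s) + b * iter_pd2 l g2 (fst q, s))).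
    + apply (filter_imp (fun s => U (fst q, s))); [|now apply loc_line2].
      intros s Hs. now rewrite E.
    + apply exd_plus; apply exd_scal; auto.
Qed.

Lemma cont2d (g : R2 -> R) z : continuous g z ->
  continuity_2d_pt (fun u v => g (u,v)) (fst z) (snd z).
Proof.
  intros H. apply continuity_2d_pt_filterlim. destruct z as [x y]. simpl.
  eapply filterlim_ext; [|exact H]. intros [u v]; reflexivity.
Qed.

Lemma open_loc2d (U : R2 -> Prop) q : open U -> U q ->
  locally_2d (fun u v => U (u,v)) (fst q) (snd q).
Proof.
  intros HU Hq. apply locally_2d_locally. destruct q as [x y]; simpl.
  eapply filter_imp; [|apply HU; exact Hq]. intros [u v] H; exact H.
Qed.

Lemma schwarz2 U g q : open U -> smooth2 U g -> U q ->
  pd2 false (pd2 true g) q = pd2 true (pd2 false g) q.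
Proof.
  intros HU Hg Hq. pose proof (open_loc2d U q HU Hq) as Hl.
  destruct q as [x y]. unfold pd2; simpl. symmetry.
  apply (Schwarz (fun u v => g (u,v))).
  - destruct Hl as [d Hd]. exists d. intros u v Hu Hv. specialize (Hd u v Hu Hv).
    split; [exact (smooth_exu U g (u,v) Hg Hd)|].
    split; [exact (smooth_exw U g (u,v) Hg Hd)|].
    split; [exact (smooth_exu U (pd2 false g) (u,v) (smooth_pd _ _ _ Hg) Hd)|].
    exact (smooth_exw U (pd2 true g) (u,v) (smooth_pd _ _ _ Hg) Hd).
  - exact (cont2d (pd2 true (pd2 false g)) (x,y) (smooth_cont _ _ _ (smooth_pd _ _ _ (smooth_pd _ _ _ Hg)) Hq)).
  - exact (cont2d (pd2 false (pd2 true g)) (x,y) (smooth_cont _ _ _ (smooth_pd _ _ _ (smooth_pd _ _ _ Hg)) Hq)).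
Qed.

Lemma smooth_diff_n U n : forall g z, smooth2 U g -> U z ->
  ex_diff_n (fun u v => g (u,v)) n (fst z) (snd z).
Proof.
  induction n as [|n IH]; intros g [x y] Hg Hz; simpl.
  - split; [exact (cont2d g (x,y) (smooth_cont _ _ _ Hg Hz))|trivial].
  - split; [exact (cont2d g (x,y) (smooth_cont _ _ _ Hg Hz))|].
    split; [exact (smooth_exu U g (x,y) Hg Hz)|].
    split; [exact (smooth_exw U g (x,y) Hg Hz)|].
    split.
    + exact (IH (pd2 true g) (x,y) (smooth_pd _ _ _ Hg) Hz).
    + exact (IH (pd2 false g) (x,y) (smooth_pd _ _ _ Hg) Hz).
Qed.

Lemma smooth_diff U g z : open U -> smooth2 U g -> U z ->
  differentiable_pt_lim (fun u v => g (u,v)) (fst z) (snd z) (pd2 true g z) (pd2 false g z).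
Proof.
  intros HU Hg Hz.
  pose proof (open_loc2d U z HU Hz) as Hl.
  destruct z as [x y]; simpl in *.
  assert (HT := Taylor_Lagrange_2d (fun u v => g (u,v)) 1 x y).
  destruct HT as [D HD].
  { destruct Hl as [d Hd]. exists d. intros u v Hu Hv.
    exact (smooth_diff_n U 2 g (u,v) Hg (Hd u v Hu Hv)). }
  unfold DL_pol, differential, partial_derive in HD. simpl in HD.
  assert (C00 : Binomial.C 0 0 = 1) by (unfold Binomial.C; simpl; field).
  assert (C10 : Binomial.C 1 0 = 1) by (unfold Binomial.C; simpl; field).
  assert (C11 : Binomial.C 1 1 = 1) by (unfold Binomial.C; simpl; field).
  rewrite C00, C10, C11 in HD.
  intros eps. destruct HD as [d Hd].
  assert (Hk : 0 < eps / (Rabs D + 1)).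
  { apply Rdiv_lt_0_compat; [apply cond_pos|]. pose proof (Rabs_pos D); lra. }
  assert (Hm : 0 < Rmin d (eps / (Rabs D + 1))).
  { apply Rmin_pos; [apply cond_pos| exact Hk]. }
  exists (mkposreal _ Hm). intros u v Hu Hv. simpl in Hu, Hv.
  assert (Hu1 : Rabs (u - x) < d) by (eapply Rlt_le_trans; [exact Hu| apply Rmin_l]).
  assert (Hv1 : Rabs (v - y) < d) by (eapply Rlt_le_trans; [exact Hv| apply Rmin_l]).
  assert (Hu2 : Rabs (u - x) < eps / (Rabs D + 1)) by (eapply Rlt_le_trans; [exact Hu| apply Rmin_r]).
  assert (Hv2 : Rabs (v - y) < eps / (Rabs D + 1)) by (eapply Rlt_le_trans; [exact Hv| apply Rmin_r]).
  specialize (Hd u v Hu1 Hv1).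
  set (M := Rmax (Rabs (u - x)) (Rabs (v - y))) in *.
  assert (HM0 : 0 <= M) by (unfold M; eapply Rle_trans; [apply Rabs_pos| apply Rmax_l]).
  assert (HMk : M <= eps / (Rabs D + 1)) by (unfold M; apply Rmax_lub; lra).
  set (k := eps / (Rabs D + 1)) in *.
  assert (Hke : k * (Rabs D + 1) = eps).
  { unfold k. field. pose proof (Rabs_pos D); lra. }
  assert (HDa : D <= Rabs D) by apply Rle_abs.
  assert (HDp : 0 <= Rabs D) by apply Rabs_pos.
  match goal with |- Rabs ?a <= _ => match type of Hd with Rabs ?b <= _ =>
    replace a with b by (field) end end.
  eapply Rle_trans; [exact Hd|].
  assert (D * (M * (M * 1)) <= Rabs D * (M * M)) by (rewrite Rmult_1_r; apply Rmult_le_compat_r; nra).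
  assert (Rabs D * (M * M) <= Rabs D * (M * k)) by (apply Rmult_le_compat_l; nra).
  nra.
Qed.

Definition line (b : bool) (g : R2 -> R) (q : R2) : R -> R :=
  fun s => if b then g (s, snd q) else g (fst q, s).
Definition pt (b : bool) (q : R2) : R := if b then fst q else snd q.

Lemma pd2_line b g q : pd2 b g q = Derive (line b g q) (pt b q).
Proof. destruct b; reflexivity. Qed.
Lemma line_pt b g q : line b g q (pt b q) = g q.
Proof. destruct b, q; reflexivity. Qed.

Definition HD b g q l := is_derive (line b g q) (pt b q) l.

Lemma HD_pd2 b g q l : HD b g q l -> pd2 b g q = l.
Proof. intros H. rewrite pd2_line. now apply is_derive_unique. Qed.

Lemma HD_smooth U b g q : smooth2 U g -> U q -> HD b g q (pd2 b g q).
Proof.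
  intros Hg Hq. unfold HD. rewrite pd2_line. apply Derive_correct.
  destruct b; [exact (smooth_exu U g q Hg Hq)|exact (smooth_exw U g q Hg Hq)].
Qed.

Lemma HD_const b c q : HD b (fun _ => c) q 0.
Proof. unfold HD. apply (is_derive_ext (fun _ => c)); [intros; now destruct b|]. apply (is_derive_const (V := R_NormedModule)). Qed.

Lemma HD_plus b g h q dg dh : HD b g q dg -> HD b h q dh ->
  HD b (fun z => g z + h z) q (dg + dh).
Proof.
  unfold HD. intros H1 H2.
  apply (is_derive_ext (fun s => line b g q s + line b h q s)); [intros; now destruct b|].
  now apply (is_derive_plus (line b g q) (line b h q)).
Qed.

Lemma HD_opp b g q dg : HD b g q dg -> HD b (fun z => - g z) q (- dg).
Proof.
  unfold HD. intros H1.
  apply (is_derive_ext (fun s => - line b g q s)); [intros; now destruct b|].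
  now apply (is_derive_opp (line b g q)).
Qed.

Lemma HD_mult b g h q dg dh : HD b g q dg -> HD b h q dh ->
  HD b (fun z => g z * h z) q (dg * h q + g q * dh).
Proof.
  unfold HD. intros H1 H2.
  apply (is_derive_ext (fun s => line b g q s * line b h q s)); [intros; now destruct b|].
  rewrite <- (line_pt b g q), <- (line_pt b h q).
  pose proof (is_derive_mult (line b g q) (line b h q) _ _ _ H1 H2) as H3.
  apply H3. intros; apply Rmult_comm.
Qed.

Lemma HD_scal b g q c dg : HD b g q dg -> HD b (fun z => c * g z) q (c * dg).
Proof.
  intros H. replace (c * dg) with (0 * g q + c * dg) by ring.
  apply HD_mult; [apply HD_const|exact H].
Qed.

Lemma HD_chain P U b g X1 X2 q : open P -> smooth2 P g -> P (X1 q, X2 q) ->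
  smooth2 U X1 -> smooth2 U X2 -> U q ->
  HD b (fun z => g (X1 z, X2 z)) q
    (pd2 true g (X1 q, X2 q) * pd2 b X1 q + pd2 false g (X1 q, X2 q) * pd2 b X2 q).
Proof.
  intros HP Hg HPq H1 H2 Hq.
  pose proof (smooth_diff P g (X1 q, X2 q) HP Hg HPq) as Hd. simpl in Hd.
  pose proof (HD_smooth U b X1 q H1 Hq) as D1.
  pose proof (HD_smooth U b X2 q H2 Hq) as D2.
  unfold HD in *. apply is_derive_Reals in D1. apply is_derive_Reals in D2.
  rewrite <- (line_pt b X1 q), <- (line_pt b X2 q) in Hd.
  pose proof (derivable_pt_lim_comp_2d (fun u v => g (u, v)) (line b X1 q) (line b X2 q) (pt b q) _ _ _ _ Hd D1 D2) as H.
  rewrite (line_pt b X1 q), (line_pt b X2 q) in H.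
  apply is_derive_Reals in H.
  apply (is_derive_ext (fun t => g (line b X1 q t, line b X2 q t))); [intros; now destruct b|exact H].
Qed.

Lemma HD_eq b g q l l' : HD b g q l -> l = l' -> HD b g q l'.
Proof. intros H E; now rewrite <- E. Qed.

Lemma gmet_snd eps f p i j : gmet eps f p i j = gmet eps f (0, snd p) i j.
Proof. destruct i as [|[|[|i]]]; destruct j as [|[|[|j]]]; reflexivity. Qed.

Lemma pd3_0 eps f i j p : pd3 0 (fun p' => gmet eps f p' i j) p = 0.
Proof.
  unfold pd3. rewrite (Derive_ext _ (fun _ => gmet eps f (0, snd p) i j)).
  - apply Derive_const.
  - intros t. rewrite gmet_snd. reflexivity.
Qed.

Lemma gmet_const eps f p p' j l : (j <> 2%nat \/ l <> 2%nat) ->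
  gmet eps f p j l = gmet eps f p' j l.
Proof.
  destruct j as [|[|[|j]]]; destruct l as [|[|[|l]]]; simpl; intros H; try reflexivity.
  destruct H; congruence.
Qed.

Lemma pd3_const eps f k i j p : (i <> 2%nat \/ j <> 2%nat) ->
  pd3 k (fun p' => gmet eps f p' i j) p = 0.
Proof.
  intros H. unfold pd3. rewrite (Derive_ext _ (fun _ => gmet eps f p i j)).
  - apply Derive_const.
  - intros t. now apply gmet_const.
Qed.

Lemma pd3_1_22 eps f p : ex_derive (fun s => f (s, snd (snd p))) (fst (snd p)) ->
  pd3 1 (fun p' => gmet eps f p' 2 2) p = pd2 true f (snd p).
Proof.
  intros H. unfold pd3, pd2. simpl.
  exact (Derive_shift (fun s => f (s, snd (snd p))) _ H).
Qed.

Lemma chr2 eps f p i j : christoffel eps f p 2 i j = 0.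
Proof.
  unfold christoffel, sum3. cbv beta.
  rewrite (pd3_const eps f i j 0) by (right; discriminate).
  rewrite (pd3_const eps f j i 0) by (right; discriminate).
  rewrite pd3_0.
  change (ginv eps f p 2 0) with 1. change (ginv eps f p 2 1) with 0. change (ginv eps f p 2 2) with 0.
  ring.
Qed.

Lemma chr1 eps f p i j : christoffel eps f p 1 i j
  = / 2 * (/ eps * (- pd3 1 (fun p' => gmet eps f p' i j) p)).
Proof.
  unfold christoffel, sum3. cbv beta.
  rewrite (pd3_const eps f i j 1) by (right; discriminate).
  rewrite (pd3_const eps f j i 1) by (right; discriminate).
  change (ginv eps f p 1 0) with 0. change (ginv eps f p 1 1) with (/ eps). change (ginv eps f p 1 2) with 0.
  ring.
Qed.

Lemma covD2 eps f X V a b q :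
  covD eps f X V a b q 2%nat = Derive (fun s => V (fst q + s * a, snd q + s * b) 2%nat) 0.
Proof. unfold covD, sum3. cbv beta. rewrite !chr2. ring. Qed.

Lemma covD1 eps f X V a b q :
  covD eps f X V a b q 1%nat = Derive (fun s => V (fst q + s * a, snd q + s * b) 1%nat) 0
    + / 2 * (/ eps * (- pd3 1 (fun p' => gmet eps f p' 2 2) (X q))) * tang X a b q 2%nat * V q 2%nat.
Proof.
  unfold covD, sum3. cbv beta. rewrite !chr1.
  rewrite !(pd3_const eps f 1 0) by (left; discriminate).
  rewrite !(pd3_const eps f 1 1) by (left; discriminate).
  rewrite !(pd3_const eps f 1 2 0) by (right; discriminate).
  rewrite !(pd3_const eps f 1 2 1) by (right; discriminate).
  ring.
Qed.

Lemma dir_u (h : R2 -> R) q : ex_derive (fun s => h (s, snd q)) (fst q) ->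
  Derive (fun s => h (fst q + s * 1, snd q + s * 0)) 0 = pd2 true h q.
Proof.
  intros H. rewrite (Derive_ext _ (fun s => (fun t => h (t, snd q)) (fst q + s))).
  - exact (Derive_shift _ _ H).
  - intros t. cbv beta. f_equal. f_equal; ring.
Qed.

Lemma dir_w (h : R2 -> R) q : ex_derive (fun s => h (fst q, s)) (snd q) ->
  Derive (fun s => h (fst q + s * 0, snd q + s * 1)) 0 = pd2 false h q.
Proof.
  intros H. rewrite (Derive_ext _ (fun s => (fun t => h (fst q, t)) (snd q + s))).
  - exact (Derive_shift _ _ H).
  - intros t. cbv beta. f_equal. f_equal; ring.
Qed.

Definition Afun (v2 v3 : R2 -> R) : R2 -> R := fun q => / sqrt 2 * v2 q + (- / sqrt 2) * v3 q.

Lemma ff1 f X v1 v2 v3 q : frame_field f X v1 v2 v3 q 1%nat = v1 q.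
Proof. unfold frame_field, e1, e2, e3. simpl. ring. Qed.
Lemma ff2 f X v1 v2 v3 q : frame_field f X v1 v2 v3 q 2%nat = Afun v2 v3 q.
Proof. unfold frame_field, e1, e2, e3, Afun. simpl. unfold Rdiv. ring. Qed.

Definition Hyps (eps delta : R) (N : R3 -> Prop) (f : R2 -> R)
  (U : R2 -> Prop) (X : R2 -> R3) (v1 v2 v3 lam : R2 -> R) : Prop :=
  (eps = 1 \/ eps = -1) /\
  (delta = 1 \/ delta = -1) /\
  open N /\
  smooth2 (fun q => exists t, N (t, q)) f /\
  open U /\
  (forall q, U q -> N (X q)) /\
  (forall k, smooth2 U (Xc X k)) /\
  (forall q, U q -> hdet eps f X q <> 0) /\
  smooth2 U v1 /\ smooth2 U v2 /\ smooth2 U v3 /\ smooth2 U lam /\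
  (forall q, U q ->
     gdot eps f (X q) (frame_field f X v1 v2 v3 q) (Xu X q) = 0 /\
     gdot eps f (X q) (frame_field f X v1 v2 v3 q) (Xw X q) = 0) /\
  (forall q, U q -> eps * v1 q ^ 2 + v2 q ^ 2 - v3 q ^ 2 = delta) /\
  (forall q, U q -> v1 q <> 0) /\
  (forall q a b k, U q ->
     - covD eps f X (frame_field f X v1 v2 v3) a b q k = lam q * tang X a b q k).

Definition PrN (N : R3 -> Prop) : R2 -> Prop := fun z => exists t, N (t, z).

Lemma open_PrN N : open N -> open (PrN N).
Proof.
  intros HN z [t Ht]. destruct (HN _ Ht) as [e He]. exists e. intros z' Hz'.
  exists t. apply He. exact (conj (ball_center _ _) Hz').
Qed.

Lemma snd_X (X : R2 -> R3) z : snd (X z) = (Xc X 1 z, Xc X 2 z).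
Proof. unfold Xc, coord. destruct (X z) as [t [x y]]. reflexivity. Qed.

Lemma PrN_X N (X : R2 -> R3) z : N (X z) -> PrN N (Xc X 1 z, Xc X 2 z).
Proof. intros H. rewrite <- snd_X. exists (fst (X z)). now rewrite <- surjective_pairing. Qed.

Lemma deq U g h b q lg lh : open U -> U q -> (forall z, U z -> g z = h z) ->
  HD b g q lg -> HD b h q lh -> lg = lh.
Proof.
  intros HU Hq E H1 H2. rewrite <- (HD_pd2 _ _ _ _ H1), <- (HD_pd2 _ _ _ _ H2).
  now apply pd2_ext_on with U.
Qed.

Lemma smoothA U v2 v3 : open U -> smooth2 U v2 -> smooth2 U v3 -> smooth2 U (Afun v2 v3).
Proof. intros; unfold Afun; now apply smooth_lin. Qed.

Lemma eqY eps delta N f U X v1 v2 v3 lam b q :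
  Hyps eps delta N f U X v1 v2 v3 lam -> U q ->
  - pd2 b (Afun v2 v3) q = lam q * pd2 b (Xc X 2) q.
Proof.
  intros H Hq.
  destruct H as (Heps & Hdel & HN & Hf & HU & HXN & HX & Hdet & Hv1 & Hv2 & Hv3 & Hlam & Hort & Hnorm & Hnz & Hum).
  pose proof (smoothA U v2 v3 HU Hv2 Hv3) as HA.
  destruct b.
  - pose proof (Hum q 1 0 2%nat Hq) as E. rewrite covD2 in E.
    rewrite (Derive_ext _ (fun s => Afun v2 v3 (fst q + s * 1, snd q + s * 0))) in E by (intros; apply ff2).
    rewrite dir_u in E by exact (smooth_exu U _ q HA Hq).
    rewrite E. unfold tang, Xu, Xw. ring.
  - pose proof (Hum q 0 1 2%nat Hq) as E. rewrite covD2 in E.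
    rewrite (Derive_ext _ (fun s => Afun v2 v3 (fst q + s * 0, snd q + s * 1))) in E by (intros; apply ff2).
    rewrite dir_w in E by exact (smooth_exw U _ q HA Hq).
    rewrite E. unfold tang, Xu, Xw. ring.
Qed.

Lemma eqX eps delta N f U X v1 v2 v3 lam b q :
  Hyps eps delta N f U X v1 v2 v3 lam -> U q ->
  - pd2 b v1 q + / 2 * / eps * (pd2 true f (Xc X 1 q, Xc X 2 q) * (pd2 b (Xc X 2) q * Afun v2 v3 q))
  = lam q * pd2 b (Xc X 1) q.
Proof.
  intros H Hq.
  destruct H as (Heps & Hdel & HN & Hf & HU & HXN & HX & Hdet & Hv1 & Hv2 & Hv3 & Hlam & Hort & Hnorm & Hnz & Hum).
  assert (Hfx : ex_derive (fun s => f (s, snd (snd (X q)))) (fst (snd (X q)))).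
  { apply (smooth_exu (PrN N) f (snd (X q)) Hf). exists (fst (X q)). rewrite <- surjective_pairing. now apply HXN. }
  destruct b.
  - pose proof (Hum q 1 0 1%nat Hq) as E. rewrite covD1 in E.
    rewrite (Derive_ext _ (fun s => v1 (fst q + s * 1, snd q + s * 0))) in E by (intros; apply ff1).
    rewrite dir_u in E by exact (smooth_exu U _ q Hv1 Hq).
    rewrite pd3_1_22 in E by exact Hfx. rewrite snd_X in E. rewrite ff2 in E.
    transitivity (lam q * tang X 1 0 q 1%nat); [rewrite <- E; unfold tang, Xu, Xw; ring| unfold tang, Xu, Xw; ring].
  - pose proof (Hum q 0 1 1%nat Hq) as E. rewrite covD1 in E.
    rewrite (Derive_ext _ (fun s => v1 (fst q + s * 0, snd q + s * 1))) in E by (intros; apply ff1).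
    rewrite dir_w in E by exact (smooth_exw U _ q Hv1 Hq).
    rewrite pd3_1_22 in E by exact Hfx. rewrite snd_X in E. rewrite ff2 in E.
    transitivity (lam q * tang X 0 1 q 1%nat); [rewrite <- E; unfold tang, Xu, Xw; ring| unfold tang, Xu, Xw; ring].
Qed.

Lemma EqYf eps delta N f U X v1 v2 v3 lam q :
  Hyps eps delta N f U X v1 v2 v3 lam -> U q ->
  pd2 false lam q * pd2 true (Xc X 2) q - pd2 true lam q * pd2 false (Xc X 2) q = 0.
Proof.
  intros H Hq. pose proof H as H'.
  destruct H' as (Heps & Hdel & HN & Hf & HU & HXN & HX & Hdet & Hv1 & Hv2 & Hv3 & Hlam & Hort & Hnorm & Hnz & Hum).
  pose proof (smoothA U v2 v3 HU Hv2 Hv3) as HA.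
  assert (E1 : - pd2 false (pd2 true (Afun v2 v3)) q
     = pd2 false lam q * pd2 true (Xc X 2) q + lam q * pd2 false (pd2 true (Xc X 2)) q).
  { apply (deq U (fun z => - pd2 true (Afun v2 v3) z) (fun z => lam z * pd2 true (Xc X 2) z) false q _ _ HU Hq).
    - intros z Hz. exact (eqY _ _ _ _ _ _ _ _ _ _ true z H Hz).
    - apply HD_opp. apply (HD_smooth U). apply smooth_pd; exact HA. exact Hq.
    - apply HD_mult; apply (HD_smooth U); auto. apply smooth_pd; auto. }
  assert (E2 : - pd2 true (pd2 false (Afun v2 v3)) q
     = pd2 true lam q * pd2 false (Xc X 2) q + lam q * pd2 true (pd2 false (Xc X 2)) q).
  { apply (deq U (fun z => - pd2 false (Afun v2 v3) z) (fun z => lam z * pd2 false (Xc X 2) z) true q _ _ HU Hq).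
    - intros z Hz. exact (eqY _ _ _ _ _ _ _ _ _ _ false z H Hz).
    - apply HD_opp. apply (HD_smooth U). apply smooth_pd; exact HA. exact Hq.
    - apply HD_mult; apply (HD_smooth U); auto. apply smooth_pd; auto. }
  rewrite (schwarz2 U _ q HU HA Hq) in E1.
  rewrite (schwarz2 U _ q HU (HX 2%nat) Hq) in E1.
  lra.
Qed.

Lemma EqXf eps delta N f U X v1 v2 v3 lam q :
  Hyps eps delta N f U X v1 v2 v3 lam -> U q ->
  pd2 false lam q * pd2 true (Xc X 1) q - pd2 true lam q * pd2 false (Xc X 1) q
  = / 2 * / eps * pd2 true (pd2 true f) (Xc X 1 q, Xc X 2 q) * Afun v2 v3 q *
    (pd2 false (Xc X 1) q * pd2 true (Xc X 2) q - pd2 true (Xc X 1) q * pd2 false (Xc X 2) q).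
Proof.
  intros H Hq. pose proof H as H'.
  destruct H' as (Heps & Hdel & HN & Hf & HU & HXN & HX & Hdet & Hv1 & Hv2 & Hv3 & Hlam & Hort & Hnorm & Hnz & Hum).
  pose proof (smoothA U v2 v3 HU Hv2 Hv3) as HA.
  pose proof (open_PrN N HN) as HP.
  pose proof (smooth_pd _ f true Hf) as Hfx.
  pose proof (PrN_X N X q (HXN q Hq)) as HPq.
  set (K0 := / 2 * / eps).
  assert (E1 : - pd2 false (pd2 true v1) q + K0 * (
     (pd2 true (pd2 true f) (Xc X 1 q, Xc X 2 q) * pd2 false (Xc X 1) q
      + pd2 false (pd2 true f) (Xc X 1 q, Xc X 2 q) * pd2 false (Xc X 2) q)
     * (pd2 true (Xc X 2) q * Afun v2 v3 q)
     + pd2 true f (Xc X 1 q, Xc X 2 q) *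
       (pd2 false (pd2 true (Xc X 2)) q * Afun v2 v3 q + pd2 true (Xc X 2) q * pd2 false (Afun v2 v3) q))
     = pd2 false lam q * pd2 true (Xc X 1) q + lam q * pd2 false (pd2 true (Xc X 1)) q).
  { apply (deq U (fun z => - pd2 true v1 z + K0 * (pd2 true f (Xc X 1 z, Xc X 2 z) * (pd2 true (Xc X 2) z * Afun v2 v3 z)))
                 (fun z => lam z * pd2 true (Xc X 1) z) false q _ _ HU Hq).
    - intros z Hz. exact (eqX _ _ _ _ _ _ _ _ _ _ true z H Hz).
    - eapply HD_eq; [eapply HD_plus|].
      + apply HD_opp. apply (HD_smooth U). apply smooth_pd; exact Hv1. exact Hq.
      + eapply HD_scal. eapply HD_mult.
        * apply (HD_chain (PrN N) U false (pd2 true f) (Xc X 1) (Xc X 2) q); auto.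
        * eapply HD_mult; apply (HD_smooth U); auto. apply smooth_pd; auto.
      + reflexivity.
    - apply HD_mult; apply (HD_smooth U); auto. apply smooth_pd; auto. }
  assert (E2 : - pd2 true (pd2 false v1) q + K0 * (
     (pd2 true (pd2 true f) (Xc X 1 q, Xc X 2 q) * pd2 true (Xc X 1) q
      + pd2 false (pd2 true f) (Xc X 1 q, Xc X 2 q) * pd2 true (Xc X 2) q)
     * (pd2 false (Xc X 2) q * Afun v2 v3 q)
     + pd2 true f (Xc X 1 q, Xc X 2 q) *
       (pd2 true (pd2 false (Xc X 2)) q * Afun v2 v3 q + pd2 false (Xc X 2) q * pd2 true (Afun v2 v3) q))
     = pd2 true lam q * pd2 false (Xc X 1) q + lam q * pd2 true (pd2 false (Xc X 1)) q).
  { apply (deq U (fun z => - pd2 false v1 z + K0 * (pd2 true f (Xc X 1 z, Xc X 2 z) * (pd2 false (Xc X 2) z * Afun v2 v3 z)))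
                 (fun z => lam z * pd2 false (Xc X 1) z) true q _ _ HU Hq).
    - intros z Hz. exact (eqX _ _ _ _ _ _ _ _ _ _ false z H Hz).
    - eapply HD_eq; [eapply HD_plus|].
      + apply HD_opp. apply (HD_smooth U). apply smooth_pd; exact Hv1. exact Hq.
      + eapply HD_scal. eapply HD_mult.
        * apply (HD_chain (PrN N) U true (pd2 true f) (Xc X 1) (Xc X 2) q); auto.
        * eapply HD_mult; apply (HD_smooth U); auto. apply smooth_pd; auto.
      + reflexivity.
    - apply HD_mult; apply (HD_smooth U); auto. apply smooth_pd; auto. }
  pose proof (eqY _ _ _ _ _ _ _ _ _ _ true q H Hq) as Yu.
  pose proof (eqY _ _ _ _ _ _ _ _ _ _ false q H Hq) as Yw.
  rewrite (schwarz2 U _ q HU Hv1 Hq) in E1.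
  rewrite (schwarz2 U _ q HU (HX 2%nat) Hq) in E1.
  rewrite (schwarz2 U _ q HU (HX 1%nat) Hq) in E1.
  replace (pd2 false (Afun v2 v3) q) with (- (lam q * pd2 false (Xc X 2) q)) in E1 by lra.
  replace (pd2 true (Afun v2 v3) q) with (- (lam q * pd2 true (Xc X 2) q)) in E2 by lra.
  unfold K0 in *. nra.
Qed.

Definition ip3 e ph a0 a1 a2 b0 b1 b2 : R := a0*b2 + a2*b0 + e*a1*b1 + ph*a2*b2.
Definition det3 a0 a1 a2 b0 b1 b2 c0 c1 c2 : R :=
  a0*(b1*c2 - b2*c1) - a1*(b0*c2 - b2*c0) + a2*(b0*c1 - b1*c0).

Lemma alg_m e ph V0 V1 V2 p0 p1 p2 r0 r1 r2 :
  ip3 e ph V0 V1 V2 p0 p1 p2 = 0 -> ip3 e ph V0 V1 V2 r0 r1 r2 = 0 ->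
  ip3 e ph p0 p1 p2 p0 p1 p2 * ip3 e ph r0 r1 r2 r0 r1 r2 - ip3 e ph p0 p1 p2 r0 r1 r2 * ip3 e ph p0 p1 p2 r0 r1 r2 <> 0 ->
  V2 <> 0 -> p1 * r2 - p2 * r1 <> 0.
Proof.
  intros Ou Ow HD HV Hm. apply HD.
  assert (E2 : V2 * (p0*r1 - p1*r0) = (V0 + ph*V2) * (p1*r2 - p2*r1) - p1 * ip3 e ph V0 V1 V2 r0 r1 r2 + r1 * ip3 e ph V0 V1 V2 p0 p1 p2)
    by (unfold ip3; ring).
  assert (E1 : V2 * (p2*r0 - p0*r2) = e*V1 * (p1*r2 - p2*r1) + p2 * ip3 e ph V0 V1 V2 r0 r1 r2 - r2 * ip3 e ph V0 V1 V2 p0 p1 p2)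
    by (unfold ip3; ring).
  rewrite Ou, Ow, Hm in E1, E2.
  assert (c2 : p0*r1 - p1*r0 = 0).
  { apply (Rmult_eq_reg_l V2); auto. lra. }
  assert (c1 : p2*r0 - p0*r2 = 0).
  { apply (Rmult_eq_reg_l V2); auto. lra. }
  assert (ED : ip3 e ph p0 p1 p2 p0 p1 p2 * ip3 e ph r0 r1 r2 r0 r1 r2 - ip3 e ph p0 p1 p2 r0 r1 r2 * ip3 e ph p0 p1 p2 r0 r1 r2
     = e*ph*(p1*r2 - p2*r1)^2 - (p2*r0 - p0*r2)^2 - 2*e*(p1*r2 - p2*r1)*(p0*r1 - p1*r0)) by (unfold ip3; ring).
  rewrite ED, Hm, c1, c2. ring.
Qed.

Lemma cramer e ph y0 y1 y2 z0 z1 z2 p0 p1 p2 r0 r1 r2 v0 v1 v2 :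
  det3 p0 p1 p2 r0 r1 r2 v0 v1 v2 * ip3 e ph y0 y1 y2 z0 z1 z2 =
  det3 z0 z1 z2 r0 r1 r2 v0 v1 v2 * ip3 e ph y0 y1 y2 p0 p1 p2 +
  det3 p0 p1 p2 z0 z1 z2 v0 v1 v2 * ip3 e ph y0 y1 y2 r0 r1 r2 +
  det3 p0 p1 p2 r0 r1 r2 z0 z1 z2 * ip3 e ph y0 y1 y2 v0 v1 v2.
Proof. unfold det3, ip3. ring. Qed.

Lemma gram e ph p0 p1 p2 r0 r1 r2 v0 v1 v2 :
  let a := ip3 e ph p0 p1 p2 p0 p1 p2 in
  let b := ip3 e ph p0 p1 p2 r0 r1 r2 in
  let c := ip3 e ph p0 p1 p2 v0 v1 v2 in
  let d := ip3 e ph r0 r1 r2 r0 r1 r2 in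
  let g := ip3 e ph r0 r1 r2 v0 v1 v2 in
  let h := ip3 e ph v0 v1 v2 v0 v1 v2 in
  det3 p0 p1 p2 r0 r1 r2 v0 v1 v2 ^ 2 * (- e) =
  a*(d*h - g*g) - b*(b*h - g*c) + c*(b*g - d*c).
Proof. unfold det3, ip3. ring. Qed.

Lemma alg_proj e ph V0 V1 V2 p0 p1 p2 r0 r1 r2 z0 z1 z2 :
  ip3 e ph V0 V1 V2 p0 p1 p2 = 0 -> ip3 e ph V0 V1 V2 r0 r1 r2 = 0 ->
  ip3 e ph V0 V1 V2 V0 V1 V2 <> 0 -> e <> 0 ->
  ip3 e ph p0 p1 p2 p0 p1 p2 * ip3 e ph r0 r1 r2 r0 r1 r2 - ip3 e ph p0 p1 p2 r0 r1 r2 * ip3 e ph p0 p1 p2 r0 r1 r2 <> 0 ->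
  (ip3 e ph r0 r1 r2 r0 r1 r2 * p2 - ip3 e ph p0 p1 p2 r0 r1 r2 * r2) * ip3 e ph p0 p1 p2 z0 z1 z2
  + (ip3 e ph p0 p1 p2 p0 p1 p2 * r2 - ip3 e ph p0 p1 p2 r0 r1 r2 * p2) * ip3 e ph r0 r1 r2 z0 z1 z2
  = (ip3 e ph p0 p1 p2 p0 p1 p2 * ip3 e ph r0 r1 r2 r0 r1 r2 - ip3 e ph p0 p1 p2 r0 r1 r2 * ip3 e ph p0 p1 p2 r0 r1 r2)
    * (z2 - V2 * ip3 e ph V0 V1 V2 z0 z1 z2 / ip3 e ph V0 V1 V2 V0 V1 V2).
Proof.
  intros Ou Ow HN He HD.
  pose proof (gram e ph p0 p1 p2 r0 r1 r2 V0 V1 V2) as G. cbv zeta in G.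
  pose proof (cramer e ph) as C.
  set (h11 := ip3 e ph p0 p1 p2 p0 p1 p2) in *.
  set (h12 := ip3 e ph p0 p1 p2 r0 r1 r2) in *.
  set (h22 := ip3 e ph r0 r1 r2 r0 r1 r2) in *.
  set (N := ip3 e ph V0 V1 V2 V0 V1 V2) in *.
  set (D := h11 * h22 - h12 * h12) in *.
  assert (Ou' : ip3 e ph p0 p1 p2 V0 V1 V2 = 0) by (rewrite <- Ou; unfold ip3; ring).
  assert (Ow' : ip3 e ph r0 r1 r2 V0 V1 V2 = 0) by (rewrite <- Ow; unfold ip3; ring).
  rewrite Ou', Ow' in G.
  assert (Hdet : det3 p0 p1 p2 r0 r1 r2 V0 V1 V2 <> 0).
  { intros Z. assert (DN : D * N = det3 p0 p1 p2 r0 r1 r2 V0 V1 V2 ^ 2 * - e) by (rewrite G; unfold D; ring).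
    rewrite Z in DN. assert (D * N = 0) by (rewrite DN; ring).
    apply Rmult_integral in H. tauto. }
  set (al := h22 * p2 - h12 * r2). set (be := h11 * r2 - h12 * p2).
  set (y0 := al * p0 + be * r0 - D * (1 - V2 / N * V0)).
  set (y1 := al * p1 + be * r1 - D * (0 - V2 / N * V1)).
  set (y2 := al * p2 + be * r2 - D * (0 - V2 / N * V2)).
  assert (Lp : ip3 e ph y0 y1 y2 p0 p1 p2 = D * V2 / N * ip3 e ph V0 V1 V2 p0 p1 p2).
  { unfold y0, y1, y2, al, be, D, h11, h12, h22. unfold ip3. field. exact HN. }
  assert (Lr : ip3 e ph y0 y1 y2 r0 r1 r2 = D * V2 / N * ip3 e ph V0 V1 V2 r0 r1 r2).
  { unfold y0, y1, y2, al, be, D, h11, h12, h22. unfold ip3. field. exact HN. }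
  assert (LV : ip3 e ph y0 y1 y2 V0 V1 V2 = al * ip3 e ph V0 V1 V2 p0 p1 p2 + be * ip3 e ph V0 V1 V2 r0 r1 r2).
  { unfold y0, y1, y2, N. unfold ip3. field. exact HN. }
  rewrite Ou in Lp, LV. rewrite Ow in Lr, LV.
  specialize (C y0 y1 y2 z0 z1 z2 p0 p1 p2 r0 r1 r2 V0 V1 V2).
  rewrite Lp, Lr, LV in C.
  assert (Lz : ip3 e ph y0 y1 y2 z0 z1 z2 = 0).
  { apply (Rmult_eq_reg_l (det3 p0 p1 p2 r0 r1 r2 V0 V1 V2)); [|exact Hdet]. rewrite C. ring. }
  assert (E : ip3 e ph y0 y1 y2 z0 z1 z2 =
     al * ip3 e ph p0 p1 p2 z0 z1 z2 + be * ip3 e ph r0 r1 r2 z0 z1 z2 - D * (z2 - V2 * ip3 e ph V0 V1 V2 z0 z1 z2 / N)).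
  { unfold y0, y1, y2. unfold ip3. field. exact HN. }
  apply Rminus_diag_uniq. transitivity (ip3 e ph y0 y1 y2 z0 z1 z2); [rewrite E; unfold al, be; ring | exact Lz].
Qed.

Lemma gdot_ip eps f p (a b : vec3) :
  gdot eps f p a b = ip3 eps (f (snd p)) (a 0%nat) (a 1%nat) (a 2%nat) (b 0%nat) (b 1%nat) (b 2%nat).
Proof. unfold gdot, sum3, gmet, ip3. simpl. ring. Qed.

Lemma hdet_ip eps f X q : hdet eps f X q =
  let p := Xu X q in let r := Xw X q in let ph := f (snd (X q)) in
  ip3 eps ph (p 0%nat) (p 1%nat) (p 2%nat) (p 0%nat) (p 1%nat) (p 2%nat) *
  ip3 eps ph (r 0%nat) (r 1%nat) (r 2%nat) (r 0%nat) (r 1%nat) (r 2%nat) -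
  ip3 eps ph (p 0%nat) (p 1%nat) (p 2%nat) (r 0%nat) (r 1%nat) (r 2%nat) *
  ip3 eps ph (p 0%nat) (p 1%nat) (p 2%nat) (r 0%nat) (r 1%nat) (r 2%nat).
Proof. unfold hdet, h11, h12, h22. rewrite !gdot_ip. reflexivity. Qed.

Definition Fxx (f : R2 -> R) (X : R2 -> R3) (z : R2) : R := pd2 true (pd2 true f) (Xc X 1 z, Xc X 2 z).

Lemma pointwise eps delta N f U X v1 v2 v3 lam q :
  Hyps eps delta N f U X v1 v2 v3 lam -> U q -> Afun v2 v3 q <> 0 ->
  pd2 true lam q = - (/ 2 * / eps) * Fxx f X q * Afun v2 v3 q * pd2 true (Xc X 2) q /\
  pd2 false lam q = - (/ 2 * / eps) * Fxx f X q * Afun v2 v3 q * pd2 false (Xc X 2) q.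
Proof.
  intros H Hq HA.
  pose proof (EqYf _ _ _ _ _ _ _ _ _ _ q H Hq) as EY.
  pose proof (EqXf _ _ _ _ _ _ _ _ _ _ q H Hq) as EX.
  pose proof H as H'.
  destruct H' as (Heps & Hdel & HN & Hf & HU & HXN & HX & Hdet & Hv1 & Hv2 & Hv3 & Hlam & Hort & Hnorm & Hnz & Hum).
  destruct (Hort q Hq) as [Ou Ow]. rewrite gdot_ip in Ou, Ow.
  pose proof (Hdet q Hq) as HD. rewrite hdet_ip in HD. cbv zeta in HD.
  rewrite ff2 in Ou, Ow.
  pose proof (alg_m _ _ _ _ _ _ _ _ _ _ _ Ou Ow HD HA) as Hm.
  unfold Xu, Xw in Hm. fold (Fxx f X q) in EX.
  set (lu := pd2 true lam q) in *. set (lw := pd2 false lam q) in *.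
  set (p1 := pd2 true (Xc X 1) q) in *. set (p2 := pd2 true (Xc X 2) q) in *.
  set (r1 := pd2 false (Xc X 1) q) in *. set (r2 := pd2 false (Xc X 2) q) in *.
  set (K := / 2 * / eps * Fxx f X q * Afun v2 v3 q) in *.
  split.
  - apply (Rmult_eq_reg_r (p1 * r2 - p2 * r1)); [|exact Hm].
    transitivity (p2 * (lw * p1 - lu * r1) - p1 * (lw * p2 - lu * r2)); [ring|].
    rewrite EX, EY. unfold K. ring.
  - apply (Rmult_eq_reg_r (p1 * r2 - p2 * r1)); [|exact Hm].
    transitivity (r2 * (lw * p1 - lu * r1) - r1 * (lw * p2 - lu * r2)); [ring|].
    rewrite EX, EY. unfold K. ring.
Qed.

Lemma pd2_loc0 (g : R2 -> R) b q : locally q (fun z => g z = 0) -> pd2 b g q = 0.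
Proof.
  intros H. destruct b; unfold pd2.
  - rewrite (Derive_ext_loc _ (fun _ => 0)); [apply Derive_const|]. now apply (loc_line1 (fun z => g z = 0)).
  - rewrite (Derive_ext_loc _ (fun _ => 0)); [apply Derive_const|]. now apply (loc_line2 (fun z => g z = 0)).
Qed.

Lemma nbhd eps delta N f U X v1 v2 v3 lam q :
  Hyps eps delta N f U X v1 v2 v3 lam ->
  locally q (fun z => Afun v2 v3 z = 0 /\ U z) ->
  pd2 true lam q = 0 /\ pd2 false lam q = 0.
Proof.
  intros H Hl. pose proof H as H'.
  destruct H' as (Heps & Hdel & HN & Hf & HU & HXN & HX & Hdet & Hv1 & Hv2 & Hv3 & Hlam & Hort & Hnorm & Hnz & Hum).
  assert (L : locally q (fun z => lam z = 0)).
  { apply (filter_imp (fun z => locally z (fun z => Afun v2 v3 z = 0 /\ U z))); [|now apply locally_locally].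
    intros z Hz. pose proof (locally_singleton _ _ Hz) as [Az Uz].
    assert (Au : pd2 true (Afun v2 v3) z = 0) by (apply pd2_loc0; eapply filter_imp; [|exact Hz]; intros w [Hw _]; exact Hw).
    assert (Aw : pd2 false (Afun v2 v3) z = 0) by (apply pd2_loc0; eapply filter_imp; [|exact Hz]; intros w [Hw _]; exact Hw).
    pose proof (eqY _ _ _ _ _ _ _ _ _ _ true z H Uz) as Yu.
    pose proof (eqY _ _ _ _ _ _ _ _ _ _ false z H Uz) as Yw.
    rewrite Au in Yu. rewrite Aw in Yw.
    destruct (Req_dec (lam z) 0) as [E|E]; [exact E|exfalso].
    assert (p2 : pd2 true (Xc X 2) z = 0) by (apply (Rmult_eq_reg_l (lam z)); auto; lra).
    assert (r2 : pd2 false (Xc X 2) z = 0) by (apply (Rmult_eq_reg_l (lam z)); auto; lra).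
    destruct (Hort z Uz) as [Ou Ow]. rewrite gdot_ip in Ou, Ow. rewrite ff2, ff1, Az in Ou, Ow.
    unfold Xu, Xw in Ou, Ow. rewrite p2 in Ou. rewrite r2 in Ow. unfold ip3 in Ou, Ow.
    assert (He : eps <> 0) by (destruct Heps; lra).
    pose proof (Hnz z Uz) as Hv.
    assert (p1 : pd2 true (Xc X 1) z = 0).
    { apply (Rmult_eq_reg_l (eps * v1 z)); [|now apply Rmult_integral_contrapositive]. lra. }
    assert (r1 : pd2 false (Xc X 1) z = 0).
    { apply (Rmult_eq_reg_l (eps * v1 z)); [|now apply Rmult_integral_contrapositive]. lra. }
    apply (Hdet z Uz). rewrite hdet_ip. cbv zeta. unfold Xu, Xw. rewrite p1, p2, r1, r2. unfold ip3. ring. }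
  split; now apply pd2_loc0.
Qed.

Definition Gb f X v2 v3 lam eps b : R2 -> R := fun z =>
  pd2 b lam z + (/ 2 * / eps) * Fxx f X z * Afun v2 v3 z * pd2 b (Xc X 2) z.

Lemma Gb_cont eps delta N f U X v1 v2 v3 lam b q :
  Hyps eps delta N f U X v1 v2 v3 lam -> U q -> continuous (Gb f X v2 v3 lam eps b) q.
Proof.
  intros H Hq. pose proof H as H'.
  destruct H' as (Heps & Hdel & HN & Hf & HU & HXN & HX & Hdet & Hv1 & Hv2 & Hv3 & Hlam & Hort & Hnorm & Hnz & Hum).
  unfold Gb. apply cont_plus.
  - apply (smooth_cont U); auto. now apply smooth_pd.
  - apply cont_mult; [apply cont_mult; [apply cont_mult|]|].
    + apply cont_const.
    + unfold Fxx. apply (continuous_comp_2 (Xc X 1) (Xc X 2) (fun u v => pd2 true (pd2 true f) (u, v))).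
      * apply (smooth_cont U); auto.
      * apply (smooth_cont U); auto.
      * eapply filterlim_ext; [| apply (smooth_cont (PrN N) (pd2 true (pd2 true f)) _
              (smooth_pd _ _ _ (smooth_pd _ _ _ Hf)) (PrN_X N X q (HXN q Hq)))].
        intros [u v]; reflexivity.
    + apply (smooth_cont U); auto. apply smoothA; auto.
    + apply (smooth_cont U); auto. now apply smooth_pd.
Qed.

Lemma key eps delta N f U X v1 v2 v3 lam b q :
  Hyps eps delta N f U X v1 v2 v3 lam -> U q -> Gb f X v2 v3 lam eps b q = 0.
Proof.
  intros H Hq. pose proof H as H'.
  destruct H' as (Heps & Hdel & HN & Hf & HU & HXN & HX & Hdet & Hv1 & Hv2 & Hv3 & Hlam & Hort & Hnorm & Hnz & Hum).
  destruct (Req_dec (Gb f X v2 v3 lam eps b q) 0) as [E|Hne]; [exact E|exfalso].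
  pose proof (Gb_cont _ _ _ _ _ _ _ _ _ _ b q H Hq) as Hc.
  assert (L1 : locally q (fun z => Gb f X v2 v3 lam eps b z <> 0)).
  { apply (Hc (fun y => y <> 0)). assert (Hp : 0 < Rabs (Gb f X v2 v3 lam eps b q)) by (apply Rabs_pos_lt; exact Hne).
    exists (mkposreal _ Hp). intros y Hy Hy0. rewrite Hy0 in Hy. simpl in Hy.
    unfold ball in Hy; simpl in Hy. unfold AbsRing_ball, abs, minus, plus, opp in Hy; simpl in Hy.
    rewrite Rplus_0_l, Rabs_Ropp in Hy. lra. }
  assert (L2 : locally q (fun z => Afun v2 v3 z = 0 /\ U z)).
  { apply (filter_imp (fun z => Gb f X v2 v3 lam eps b z <> 0 /\ U z)); [|apply filter_and; auto].
    intros z [Gz Uz]. split; [|exact Uz].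
    destruct (Req_dec (Afun v2 v3 z) 0) as [A0|A0]; [exact A0|exfalso].
    apply Gz. destruct (pointwise _ _ _ _ _ _ _ _ _ _ z H Uz A0) as [E1 E2].
    unfold Gb. destruct b; [rewrite E1|rewrite E2]; ring. }
  destruct (nbhd _ _ _ _ _ _ _ _ _ _ q H L2) as [E1 E2].
  destruct (locally_singleton _ _ L2) as [A0 _].
  apply Hne. unfold Gb. rewrite A0. destruct b; [rewrite E1|rewrite E2]; ring.
Qed.

Lemma ip3_lin e ph a b (p0 p1 p2 r0 r1 r2 z0 z1 z2 : R) :
  ip3 e ph (a * p0 + b * r0) (a * p1 + b * r1) (a * p2 + b * r2) z0 z1 z2
  = a * ip3 e ph p0 p1 p2 z0 z1 z2 + b * ip3 e ph r0 r1 r2 z0 z1 z2.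
Proof. unfold ip3; ring. Qed.

Lemma s2 : sqrt 2 * sqrt 2 = 2.
Proof. apply sqrt_sqrt; lra. Qed.
Lemma s2nz : sqrt 2 <> 0.
Proof. intro Z0. pose proof s2 as H. rewrite Z0 in H. lra. Qed.

Lemma NV_gen eps f X v1 v2 v3 q :
  gdot eps f (X q) (frame_field f X v1 v2 v3 q) (frame_field f X v1 v2 v3 q)
  = eps * v1 q ^ 2 + v2 q ^ 2 - v3 q ^ 2.
Proof.
  rewrite gdot_ip. unfold frame_field, e1, e2, e3, ip3. simpl.
  transitivity (eps * v1 q ^ 2 + (v2 q ^ 2 - v3 q ^ 2) * (2 / (sqrt 2 * sqrt 2))).
  - field. exact s2nz.
  - rewrite s2. field.
Qed.

Lemma gradf eps delta N f U X v1 v2 v3 lam q (Z : vec3) :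
  Hyps eps delta N f U X v1 v2 v3 lam -> U q ->
  gdot eps f (X q) (grad eps f X lam q) Z
  = - (/ 2 * / eps) * Fxx f X q * Afun v2 v3 q *
    (Z 2%nat - Afun v2 v3 q * gdot eps f (X q) (frame_field f X v1 v2 v3 q) Z
       / gdot eps f (X q) (frame_field f X v1 v2 v3 q) (frame_field f X v1 v2 v3 q)).
Proof.
  intros H Hq.
  pose proof (key _ _ _ _ _ _ _ _ _ _ true q H Hq) as Ku.
  pose proof (key _ _ _ _ _ _ _ _ _ _ false q H Hq) as Kw.
  unfold Gb in Ku, Kw.
  pose proof H as H'.
  destruct H' as (Heps & Hdel & HN & Hf & HU & HXN & HX & Hdet & Hv1 & Hv2 & Hv3 & Hlam & Hort & Hnorm & Hnz & Hum).
  destruct (Hort q Hq) as [Ou Ow]. rewrite gdot_ip in Ou, Ow. rewrite ff2 in Ou, Ow.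
  pose proof (Hdet q Hq) as HD. rewrite hdet_ip in HD. cbv zeta in HD.
  assert (He : eps <> 0) by (destruct Heps; lra).
  pose proof (NV_gen eps f X v1 v2 v3 q) as NV.
  assert (HNz : gdot eps f (X q) (frame_field f X v1 v2 v3 q) (frame_field f X v1 v2 v3 q) <> 0).
  { rewrite NV. pose proof (Hnorm q Hq) as Hn. destruct Hdel; lra. }
  rewrite (gdot_ip _ _ _ (grad eps f X lam q)).
  unfold grad. cbv zeta. unfold hdet, h11, h12, h22. rewrite !gdot_ip.
  rewrite ip3_lin. 
  set (lu := pd2 true lam q) in *. set (lw := pd2 false lam q) in *.
  assert (Lu : lu = - (/ 2 * / eps) * Fxx f X q * Afun v2 v3 q * pd2 true (Xc X 2) q) by lra.
  assert (Lw : lw = - (/ 2 * / eps) * Fxx f X q * Afun v2 v3 q * pd2 false (Xc X 2) q) by lra.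
  pose proof (alg_proj _ _ _ _ _ _ _ _ _ _ _ (Z 0%nat) (Z 1%nat) (Z 2%nat) Ou Ow) as P.
  assert (HNz' := HNz). rewrite gdot_ip, ff2 in HNz'.
  specialize (P HNz' He HD).
  try rewrite !gdot_ip. try rewrite !ff2.
  set (K := - (/ 2 * / eps) * Fxx f X q * Afun v2 v3 q) in *.
  set (DD := ip3 eps (f (snd (X q))) (Xu X q 0%nat) (Xu X q 1%nat) (Xu X q 2%nat) (Xu X q 0%nat) (Xu X q 1%nat) (Xu X q 2%nat) *
    ip3 eps (f (snd (X q))) (Xw X q 0%nat) (Xw X q 1%nat) (Xw X q 2%nat) (Xw X q 0%nat) (Xw X q 1%nat) (Xw X q 2%nat) -
    ip3 eps (f (snd (X q))) (Xu X q 0%nat) (Xu X q 1%nat) (Xu X q 2%nat) (Xw X q 0%nat) (Xw X q 1%nat) (Xw X q 2%nat) *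
    ip3 eps (f (snd (X q))) (Xu X q 0%nat) (Xu X q 1%nat) (Xu X q 2%nat) (Xw X q 0%nat) (Xw X q 1%nat) (Xw X q 2%nat)) in *.
  rewrite Lu, Lw. unfold Xu, Xw in P |- *.
  match type of P with ?L = DD * ?R => transitivity (K / DD * L); [field; exact HD| rewrite P; field; split; assumption] end.
Qed.

Lemma fin eps delta F v1 v2 v3 t :
  (eps = 1 \/ eps = -1) -> (delta = 1 \/ delta = -1) ->
  eps * v1 ^ 2 + v2 ^ 2 - v3 ^ 2 = delta -> t * t = / 2 ->
  let A := t * v2 + - t * v3 in
  let Nn := eps * v1 ^ 2 + v2 ^ 2 - v3 ^ 2 in
  - (/ 2 * / eps) * F * A * (0 - A * (eps * v1) / Nn) = delta * (F * v1 * (v2 - v3) ^ 2 / 4) /\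
  - (/ 2 * / eps) * F * A * (t - A * v2 / Nn) = delta * (F * (v3 - v2) / 4 * (v1 ^ 2 + eps * v3 * (v2 - v3))) /\
  - (/ 2 * / eps) * F * A * (- t - A * (- v3) / Nn) = delta * (F * (v2 - v3) / 4 * (v1 ^ 2 + eps * v2 * (v2 - v3))).
Proof.
  intros He Hd Hn Ht A Nn.
  assert (ND : Nn = delta) by exact Hn. rewrite ND.
  assert (Hd0 : delta <> 0) by (destruct Hd; lra).
  assert (He0 : eps <> 0) by (destruct He; lra).
  assert (AA : A * A = (v2 - v3) ^ 2 * (t * t)) by (unfold A; ring).
  assert (At : A * t = (v2 - v3) * (t * t)) by (unfold A; ring).
  rewrite Ht in AA, At.
  assert (V1 : v1 ^ 2 = (delta - v2 ^ 2 + v3 ^ 2) * eps) by (destruct He; subst; lra).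
  split; [|split].
  - transitivity ((/ 2 * / eps) * F * (eps * v1) * (A * A) / delta); [field; auto|].
    rewrite AA. destruct He, Hd; subst; field.
  - transitivity (- (/ 2 * / eps) * F * (A * t - (A * A) * v2 / delta)); [field; auto|].
    rewrite AA, At, V1. destruct He, Hd; subst; field.
  - transitivity (- (/ 2 * / eps) * F * (- (A * t) + (A * A) * v3 / delta)); [field; auto|].
    rewrite AA, At, V1. destruct He, Hd; subst; field.
Qed.

Lemma ip_e1 eps f X v1 v2 v3 q :
  gdot eps f (X q) (frame_field f X v1 v2 v3 q) (e1 (X q)) = eps * v1 q.
Proof. rewrite gdot_ip. unfold frame_field, e1, e2, e3, ip3. simpl. ring. Qed.
Lemma ip_e2 eps f X v1 v2 v3 q :
  gdot eps f (X q) (frame_field f X v1 v2 v3 q) (e2 f (X q)) = v2 q.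
Proof.
  rewrite gdot_ip. unfold frame_field, e1, e2, e3, ip3. simpl.
  transitivity (v2 q * (2 / (sqrt 2 * sqrt 2))); [field; exact s2nz| rewrite s2; field].
Qed.
Lemma ip_e3 eps f X v1 v2 v3 q :
  gdot eps f (X q) (frame_field f X v1 v2 v3 q) (e3 f (X q)) = - v3 q.
Proof.
  rewrite gdot_ip. unfold frame_field, e1, e2, e3, ip3. simpl.
  transitivity (- v3 q * (2 / (sqrt 2 * sqrt 2))); [field; exact s2nz| rewrite s2; field].
Qed.

Theorem mainTheorem2
  (eps delta : R) (N : R3 -> Prop) (f : R2 -> R)
  (U : R2 -> Prop) (X : R2 -> R3) (v1 v2 v3 lam : R2 -> R) :
  (eps = 1 \/ eps = -1) ->
  (delta = 1 \/ delta = -1) ->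
  open N ->
  smooth2 (fun q => exists t, N (t, q)) f ->
  open U ->
  (forall q, U q -> N (X q)) ->
  (forall k, smooth2 U (Xc X k)) ->
  (* non-degenerate induced metric (Riemannian or Lorentzian) *)
  (forall q, U q -> hdet eps f X q <> 0) ->
  smooth2 U v1 -> smooth2 U v2 -> smooth2 U v3 -> smooth2 U lam ->
  (* V = v1 e1 + v2 e2 + v3 e3 is a unit normal *)
  (forall q, U q ->
     gdot eps f (X q) (frame_field f X v1 v2 v3 q) (Xu X q) = 0 /\
     gdot eps f (X q) (frame_field f X v1 v2 v3 q) (Xw X q) = 0) ->
  (forall q, U q -> eps * v1 q ^ 2 + v2 q ^ 2 - v3 q ^ 2 = delta) ->
  (forall q, U q -> v1 q <> 0) ->
  (* totally umbilical: - nabla-bar_T V = lam T for every tangent T *)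
  (forall q a b k, U q ->
     - covD eps f X (frame_field f X v1 v2 v3) a b q k = lam q * tang X a b q k) ->
  forall q, U q ->
    let p := X q in
    let fx2 := fxx f (snd p) in
    gdot eps f p (grad eps f X lam q) (e1 p)
      = delta * (fx2 * v1 q * (v2 q - v3 q) ^ 2 / 4) /\
    gdot eps f p (grad eps f X lam q) (e2 f p)
      = delta * (fx2 * (v3 q - v2 q) / 4
                 * (v1 q ^ 2 + eps * v3 q * (v2 q - v3 q))) /\
    gdot eps f p (grad eps f X lam q) (e3 f p)
      = delta * (fx2 * (v2 q - v3 q) / 4
                 * (v1 q ^ 2 + eps * v2 q * (v2 q - v3 q))).
Proof.
  intros Heps Hdel HN Hf HU HXN HX Hdet Hv1 Hv2 Hv3 Hlam Hort Hnorm Hnz Hum q Hq.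
  assert (H : Hyps eps delta N f U X v1 v2 v3 lam) by (unfold Hyps; tauto).
  cbv zeta.
  rewrite !(gradf _ _ _ _ _ _ _ _ _ _ q _ H Hq).
  rewrite ip_e1, ip_e2, ip_e3, NV_gen.
  assert (Fx : Fxx f X q = fxx f (snd (X q))) by (unfold Fxx, fxx; now rewrite snd_X).
  rewrite Fx.
  assert (Ht : / sqrt 2 * / sqrt 2 = / 2) by (rewrite <- Rinv_mult, s2; reflexivity).
  pose proof (fin eps delta (fxx f (snd (X q))) (v1 q) (v2 q) (v3 q) (/ sqrt 2) Heps Hdel (Hnorm q Hq) Ht) as F.
  cbv zeta in F. unfold Afun.
  replace (e1 (X q) 2%nat) with 0 by reflexivity.
  replace (e2 f (X q) 2%nat) with (/ sqrt 2) by (simpl; unfold Rdiv; ring).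
  replace (e3 f (X q) 2%nat) with (- / sqrt 2) by (simpl; unfold Rdiv; ring).
  exact F.
Qed.
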